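(* Let $T$ and $Q$ be session types and $X$ a type variable. If $S \in \mathrm{Sub}_{BU}(T[Q/X])$, then either $S = S'[Q/X]$ for some $S' \in \mathrm{Sub}_{BU}(T)$, or $S \in \mathrm{Sub}_{BU}(Q)$.
   Context: Session types (possibly containing free variables) are given by the grammar $T ::= \mathsf{end} \mid X \mid \mu X.T \mid {?}[T_1,\dots,T_n].S \mid {!}[T_1,\dots,T_n].S \mid \&\langle l_1:T_1,\dots,l_n:T_n\rangle \mid \oplus\langle l_1:T_1,\dots,l_n:T_n\rangle$ (input, output, branch, select), where $X$ ranges over type variables and $l_i$ over labels. Types are identified up to $\alpha$-conversion of bound variables, and all substitutions $T[Q/X]$ (replacing free occurrences of $X$ in $T$ by $Q$) are capture-avoiding. The set of bottom-up subterms $\mathrm{Sub}_{BU}(T)$ is defined by recursion on $T$: $\mathrm{Sub}_{BU}(\mathsf{end}) = \{\mathsf{end}\}$; $\mathrm{Sub}_{BU}(X) = \{X\}$; $\mathrm{Sub}_{BU}(\mu X.T') = \{\mu X.T'\} \cup \{S[\mu X.T'/X] \mid S \in \mathrm{Sub}_{BU}(T')\}$; $\mathrm{Sub}_{BU}(\&\langle l_i:T_i\rangle_{i}) = \{\&\langle l_i:T_i\rangle_i\} \cup \bigcup_i \mathrm{Sub}_{BU}(T_i)$, and likewise for $\oplus$; $\mathrm{Sub}_{BU}({?}[T_1,\dots,T_n].S) = \{{?}[T_1,\dots,T_n].S\} \cup \bigcup_i \mathrm{Sub}_{BU}(T_i) \cup \mathrm{Sub}_{BU}(S)$, and likewise for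 ${!}$. *)

(* Defs.v *)
(* Session types in pure de Bruijn representation:
   alpha-equivalence is syntactic equality; free type variables are the
   indices not bound by an enclosing mu; substitution is parallel,
   capture-avoiding substitution. *)
From Stdlib Require Import List Arith.
Import ListNotations.

Definition label := nat.

Inductive stype : Type :=
  | SEnd : stype
  | SVar : nat -> stype
  | SMu : stype -> stype                      (* mu X. T  (binds index 0 in T) *)
  | SIn : list stype -> stype -> stype        (* ?[T1..Tn].S *)
  | SOut : list stype -> stype -> stype       (* ![T1..Tn].S *)
  | SBranch : list (label * stype) -> stype
  | SSelect : list (label * stype) -> stype.

Definition up_ren (xi : nat -> nat) (n : nat) : nat :=
  match n with 0 => 0 | S m => S (xi m) end.

Fixpoint ren (xi : nat -> nat) (T : stype) : stype :=
  match T with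
  | SEnd => SEnd
  | SVar n => SVar (xi n)
  | SMu T' => SMu (ren (up_ren xi) T')
  | SIn ts U0 => SIn (map (ren xi) ts) (ren xi U0)
  | SOut ts U0 => SOut (map (ren xi) ts) (ren xi U0)
  | SBranch bs => SBranch (map (fun p => (fst p, ren xi (snd p))) bs)
  | SSelect bs => SSelect (map (fun p => (fst p, ren xi (snd p))) bs)
  end.

Definition up_sub (sigma : nat -> stype) (n : nat) : stype :=
  match n with 0 => SVar 0 | S m => ren S (sigma m) end.

Fixpoint subst (sigma : nat -> stype) (T : stype) : stype :=
  match T with
  | SEnd => SEnd
  | SVar n => sigma n
  | SMu T' => SMu (subst (up_sub sigma) T')
  | SIn ts U0 => SIn (map (subst sigma) ts) (subst sigma U0)
  | SOut ts U0 => SOut (map (subst sigma) ts) (subst sigma U0)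
  | SBranch bs => SBranch (map (fun p => (fst p, subst sigma (snd p))) bs)
  | SSelect bs => SSelect (map (fun p => (fst p, subst sigma (snd p))) bs)
  end.

(* T[Q/X] where X is the free variable with index x: replace X by Q,
   leave every other variable unchanged. *)
Definition single (x : nat) (Q : stype) (n : nat) : stype :=
  if Nat.eqb n x then Q else SVar n.

Definition substX (T : stype) (Q : stype) (x : nat) : stype :=
  subst (single x Q) T.

(* S'[mu X.T'/X] for S' living under the binder of mu X.T':
   index 0 := mu X.T', other indices decremented (they refer to the
   outer context). *)
Definition unfold_sub (U : stype) (n : nat) : stype :=
  match n with 0 => U | S m => SVar m end.

Fixpoint SubBU (T : stype) : stype -> Prop :=
  match T with
  | SEnd => fun V => V = SEnd
  | SVar n => fun V => V = SVar n
  | SMu T' => fun V =>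
      V = SMu T' \/
      exists S', SubBU T' S' /\ V = subst (unfold_sub (SMu T')) S'
  | SIn ts U => fun V =>
      V = SIn ts U \/
      (fix go (l : list stype) : Prop :=
         match l with [] => False | t :: l' => SubBU t V \/ go l' end) ts \/
      SubBU U V
  | SOut ts U => fun V =>
      V = SOut ts U \/
      (fix go (l : list stype) : Prop :=
         match l with [] => False | t :: l' => SubBU t V \/ go l' end) ts \/
      SubBU U V
  | SBranch bs => fun V =>
      V = SBranch bs \/
      (fix go (l : list (label * stype)) : Prop :=
         match l with [] => False | p :: l' => SubBU (snd p) V \/ go l' end) bs
  | SSelect bs => fun V =>
      V = SSelect bs \/
      (fix go (l : list (label * stype)) : Prop :=
         match l with [] => False | p :: l' => SubBU (snd p) V \/ go l' end) bs
  end.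

(* Main.v *)
Require Import Defs.
From Stdlib Require Import List Arith Lia.
Import ListNotations.

Section Ind.
Variable P : stype -> Prop.
Hypothesis HEnd : P SEnd.
Hypothesis HVar : forall n, P (SVar n).
Hypothesis HMu : forall T, P T -> P (SMu T).
Hypothesis HIn : forall ts U, (forall t, In t ts -> P t) -> P U -> P (SIn ts U).
Hypothesis HOut : forall ts U, (forall t, In t ts -> P t) -> P U -> P (SOut ts U).
Hypothesis HBr : forall bs, (forall p, In p bs -> P (snd p)) -> P (SBranch bs).
Hypothesis HSel : forall bs, (forall p, In p bs -> P (snd p)) -> P (SSelect bs).

Fixpoint stype_ind' (T : stype) : P T :=
  match T with
  | SEnd => HEnd
  | SVar n => HVar n
  | SMu T' => HMu T' (stype_ind' T')
  | SIn ts U => HIn ts U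
      ((fix go (l : list stype) : forall t, In t l -> P t :=
         match l with
         | [] => fun t H => False_ind _ H
         | a :: l' => fun t H =>
             match H with
             | or_introl e => eq_ind a P (stype_ind' a) t e
             | or_intror H' => go l' t H'
             end
         end) ts) (stype_ind' U)
  | SOut ts U => HOut ts U
      ((fix go (l : list stype) : forall t, In t l -> P t :=
         match l with
         | [] => fun t H => False_ind _ H
         | a :: l' => fun t H =>
             match H with
             | or_introl e => eq_ind a P (stype_ind' a) t e
             | or_intror H' => go l' t H'
             end
         end) ts) (stype_ind' U)
  | SBranch bs => HBr bs
      ((fix go (l : list (label * stype)) : forall p, In p l -> P (snd p) :=
         match l with
         | [] => fun p H => False_ind _ H
         | a :: l' => fun p H =>
             match H with
             | or_introl e => eq_ind a (fun q => P (snd q)) (stype_ind' (snd a)) p e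
             | or_intror H' => go l' p H'
             end
         end) bs)
  | SSelect bs => HSel bs
      ((fix go (l : list (label * stype)) : forall p, In p l -> P (snd p) :=
         match l with
         | [] => fun p H => False_ind _ H
         | a :: l' => fun p H =>
             match H with
             | or_introl e => eq_ind a (fun q => P (snd q)) (stype_ind' (snd a)) p e
             | or_intror H' => go l' p H'
             end
         end) bs)
  end.
End Ind.

Lemma map_ext_in' {A B} (f g : A -> B) l : (forall a, In a l -> f a = g a) -> map f l = map g l.
Proof. apply map_ext_in. Qed.

Ltac solve_lists IH :=
  first [ rewrite map_map; apply map_ext_in; intros ? Hin; rewrite IH; auto
        | apply map_ext_in; intros ? Hin; rewrite IH; auto ].

Lemma ren_ext T : forall xi zeta, (forall n, xi n = zeta n) -> ren xi T = ren zeta T.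
Proof.
  induction T using stype_ind'; intros xi zeta Hxz; simpl; f_equal; auto.
  - apply IHT. intros [|n]; simpl; auto.
  - apply map_ext_in; intros; auto.
  - apply map_ext_in; intros; auto.
  - apply map_ext_in; intros; f_equal; auto.
  - apply map_ext_in; intros; f_equal; auto.
Qed.

Lemma subst_ext T : forall s t, (forall n, s n = t n) -> subst s T = subst t T.
Proof.
  induction T using stype_ind'; intros s t Hst; simpl; f_equal; auto.
  - apply IHT. intros [|n]; simpl; auto. rewrite Hst; auto.
  - apply map_ext_in; intros; auto.
  - apply map_ext_in; intros; auto.
  - apply map_ext_in; intros; f_equal; auto.
  - apply map_ext_in; intros; f_equal; auto.
Qed.

Lemma ren_ren T : forall xi zeta, ren xi (ren zeta T) = ren (fun n => xi (zeta n)) T.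
Proof.
  induction T using stype_ind'; intros xi zeta; simpl; f_equal; auto.
  - rewrite IHT. apply ren_ext. intros [|n]; simpl; auto.
  - rewrite map_map; apply map_ext_in; intros; auto.
  - rewrite map_map; apply map_ext_in; intros; auto.
  - rewrite map_map; apply map_ext_in; intros; simpl; f_equal; auto.
  - rewrite map_map; apply map_ext_in; intros; simpl; f_equal; auto.
Qed.

Lemma ren_subst T : forall xi s, ren xi (subst s T) = subst (fun n => ren xi (s n)) T.
Proof.
  induction T using stype_ind'; intros xi s; simpl; f_equal; auto.
  - rewrite IHT. apply subst_ext. intros [|n]; simpl; auto.
    rewrite !ren_ren. apply ren_ext; auto.
  - rewrite map_map; apply map_ext_in; intros; auto.
  - rewrite map_map; apply map_ext_in; intros; auto.
  - rewrite map_map; apply map_ext_in; intros; simpl; f_equal; auto.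
  - rewrite map_map; apply map_ext_in; intros; simpl; f_equal; auto.
Qed.

Lemma subst_ren T : forall xi s, subst s (ren xi T) = subst (fun n => s (xi n)) T.
Proof.
  induction T using stype_ind'; intros xi s; simpl; f_equal; auto.
  - rewrite IHT. apply subst_ext. intros [|n]; simpl; auto.
  - rewrite map_map; apply map_ext_in; intros; auto.
  - rewrite map_map; apply map_ext_in; intros; auto.
  - rewrite map_map; apply map_ext_in; intros; simpl; f_equal; auto.
  - rewrite map_map; apply map_ext_in; intros; simpl; f_equal; auto.
Qed.

Lemma subst_subst T : forall s t, subst s (subst t T) = subst (fun n => subst s (t n)) T.
Proof.
  induction T using stype_ind'; intros s t; simpl; f_equal; auto.
  - rewrite IHT. apply subst_ext. intros [|n]; simpl; auto.
    rewrite subst_ren, ren_subst. apply subst_ext; auto.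
  - rewrite map_map; apply map_ext_in; intros; auto.
  - rewrite map_map; apply map_ext_in; intros; auto.
  - rewrite map_map; apply map_ext_in; intros; simpl; f_equal; auto.
  - rewrite map_map; apply map_ext_in; intros; simpl; f_equal; auto.
Qed.

Definition goL (V : stype) := fix go (l : list stype) : Prop :=
  match l with [] => False | t :: l' => SubBU t V \/ go l' end.
Definition goB (V : stype) := fix go (l : list (label * stype)) : Prop :=
  match l with [] => False | p :: l' => SubBU (snd p) V \/ go l' end.

Lemma goL_iff V l : goL V l <-> exists t, In t l /\ SubBU t V.
Proof.
  induction l; simpl.
  - split; [tauto| intros [? [[] _]]].
  - rewrite IHl. split.
    + intros [H|[t [H1 H2]]]; eauto.
    + intros [t [[<-|H1] H2]]; eauto.
Qed.

Lemma goB_iff V l : goB V l <-> exists p, In p l /\ SubBU (snd p) V.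
Proof.
  induction l; simpl.
  - split; [tauto| intros [? [[] _]]].
  - rewrite IHl. split.
    + intros [H|[t [H1 H2]]]; eauto.
    + intros [t [[<-|H1] H2]]; eauto.
Qed.

Lemma SubBU_In ts U V : SubBU (SIn ts U) V <->
  V = SIn ts U \/ (exists t, In t ts /\ SubBU t V) \/ SubBU U V.
Proof. change (SubBU (SIn ts U) V) with (V = SIn ts U \/ goL V ts \/ SubBU U V). rewrite goL_iff. tauto. Qed.
Lemma SubBU_Out ts U V : SubBU (SOut ts U) V <->
  V = SOut ts U \/ (exists t, In t ts /\ SubBU t V) \/ SubBU U V.
Proof. change (SubBU (SOut ts U) V) with (V = SOut ts U \/ goL V ts \/ SubBU U V). rewrite goL_iff. tauto. Qed.
Lemma SubBU_Br bs V : SubBU (SBranch bs) V <->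
  V = SBranch bs \/ (exists p, In p bs /\ SubBU (snd p) V).
Proof. change (SubBU (SBranch bs) V) with (V = SBranch bs \/ goB V bs). rewrite goB_iff. tauto. Qed.
Lemma SubBU_Sel bs V : SubBU (SSelect bs) V <->
  V = SSelect bs \/ (exists p, In p bs /\ SubBU (snd p) V).
Proof. change (SubBU (SSelect bs) V) with (V = SSelect bs \/ goB V bs). rewrite goB_iff. tauto. Qed.

Lemma SubBU_ren Q : forall xi V, SubBU (ren xi Q) V -> exists V', SubBU Q V' /\ V = ren xi V'.
Proof.
  induction Q using stype_ind'; intros xi V HV.
  - simpl in HV. subst. exists SEnd; simpl; auto.
  - simpl in HV. subst. exists (SVar n); simpl; auto.
  - simpl in HV. destruct HV as [->|[V0 [H0 ->]]].
    + exists (SMu Q); simpl; auto.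
    + destruct (IHQ _ _ H0) as [V1 [H1 ->]].
      exists (subst (unfold_sub (SMu Q)) V1). split.
      * simpl; right; eauto.
      * rewrite subst_ren, ren_subst. apply subst_ext. intros [|n]; reflexivity.
  - simpl in HV. apply SubBU_In in HV. destruct HV as [->|[[t' [Hin Ht]]|HU]].
    + exists (SIn ts Q); split; [apply SubBU_In; auto|reflexivity].
    + apply in_map_iff in Hin. destruct Hin as [t [<- Hin]].
      destruct (H t Hin _ _ Ht) as [V1 [H1 ->]]. exists V1; split; auto.
      apply SubBU_In; eauto.
    + destruct (IHQ _ _ HU) as [V1 [H1 ->]]. exists V1; split; auto. apply SubBU_In; auto.
  - simpl in HV. apply SubBU_Out in HV. destruct HV as [->|[[t' [Hin Ht]]|HU]].
    + exists (SOut ts Q); split; [apply SubBU_Out; auto|reflexivity].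
    + apply in_map_iff in Hin. destruct Hin as [t [<- Hin]].
      destruct (H t Hin _ _ Ht) as [V1 [H1 ->]]. exists V1; split; auto.
      apply SubBU_Out; eauto.
    + destruct (IHQ _ _ HU) as [V1 [H1 ->]]. exists V1; split; auto. apply SubBU_Out; auto.
  - simpl in HV. apply SubBU_Br in HV. destruct HV as [->|[p' [Hin Ht]]].
    + exists (SBranch bs); split; [apply SubBU_Br; auto|reflexivity].
    + apply in_map_iff in Hin. destruct Hin as [p [<- Hin]].
      destruct (H p Hin _ _ Ht) as [V1 [H1 ->]]. exists V1; split; auto.
      apply SubBU_Br; eauto.
  - simpl in HV. apply SubBU_Sel in HV. destruct HV as [->|[p' [Hin Ht]]].
    + exists (SSelect bs); split; [apply SubBU_Sel; auto|reflexivity].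
    + apply in_map_iff in Hin. destruct Hin as [p [<- Hin]].
      destruct (H p Hin _ _ Ht) as [V1 [H1 ->]]. exists V1; split; auto.
      apply SubBU_Sel; eauto.
Qed.

Lemma subst_id T : subst SVar T = T.
Proof.
  induction T using stype_ind'; simpl; f_equal; auto.
  - rewrite <- IHT at 2. apply subst_ext. intros [|n]; reflexivity.
  - rewrite <- (map_id ts) at 2. apply map_ext_in; auto.
  - rewrite <- (map_id ts) at 2. apply map_ext_in; auto.
  - rewrite <- (map_id bs) at 2. apply map_ext_in; intros [? ?] ?; simpl; f_equal; auto.
    apply (H _ H0).
  - rewrite <- (map_id bs) at 2. apply map_ext_in; intros [? ?] ?; simpl; f_equal; auto.
    apply (H _ H0).
Qed.

Theorem mainTheorem2 (T Q : stype) (x : nat) (S : stype) :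
  SubBU (substX T Q x) S ->
  (exists S', SubBU T S' /\ S = substX S' Q x) \/ SubBU Q S.
Proof.
  revert Q x S. unfold substX.
  induction T using stype_ind'; intros Q x V HV.
  - simpl in HV. subst. left. exists SEnd; simpl; auto.
  - simpl in HV. unfold single in HV. destruct (Nat.eqb n x) eqn:E.
    + right; auto.
    + subst. left. exists (SVar n); simpl; split; auto. unfold single; rewrite E; auto.
  - assert (Heq : subst (single x Q) (SMu T) = SMu (subst (single (S x) (ren S Q)) T)).
    { simpl. f_equal. apply subst_ext. intros [|n]; simpl; unfold single; simpl; auto.
      destruct (Nat.eqb n x); auto. }
    rewrite Heq in HV. simpl in HV. destruct HV as [->|[V0 [H0 ->]]].
    + left. exists (SMu T); simpl; split; auto.
    + destruct (IHT _ _ _ H0) as [[S1 [H1 ->]]|HR].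
      * left. exists (subst (unfold_sub (SMu T)) S1). split.
        -- simpl; right; eauto.
        -- rewrite !subst_subst. apply subst_ext. intros [|n].
           ++ simpl. rewrite <- Heq. reflexivity.
           ++ simpl. unfold single. simpl. destruct (Nat.eqb n x).
              ** rewrite subst_ren. rewrite <- (subst_id Q) at 2. apply subst_ext; reflexivity.
              ** reflexivity.
      * destruct (SubBU_ren _ _ _ HR) as [V1 [H1 ->]]. right.
        rewrite subst_ren. rewrite <- (subst_id V1) in H1.
        erewrite subst_ext; [exact H1|reflexivity].
  - simpl in HV. apply SubBU_In in HV. destruct HV as [->|[[t' [Hin Ht]]|HU]].
    + left. exists (SIn ts T); split; [apply SubBU_In; auto|reflexivity].
    + apply in_map_iff in Hin. destruct Hin as [t [<- Hin]].
      destruct (H t Hin _ _ _ Ht) as [[S1 [H1 ->]]|HR]; auto.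
      left. exists S1; split; auto. apply SubBU_In; eauto.
    + destruct (IHT _ _ _ HU) as [[S1 [H1 ->]]|HR]; auto.
      left. exists S1; split; auto. apply SubBU_In; auto.
  - simpl in HV. apply SubBU_Out in HV. destruct HV as [->|[[t' [Hin Ht]]|HU]].
    + left. exists (SOut ts T); split; [apply SubBU_Out; auto|reflexivity].
    + apply in_map_iff in Hin. destruct Hin as [t [<- Hin]].
      destruct (H t Hin _ _ _ Ht) as [[S1 [H1 ->]]|HR]; auto.
      left. exists S1; split; auto. apply SubBU_Out; eauto.
    + destruct (IHT _ _ _ HU) as [[S1 [H1 ->]]|HR]; auto.
      left. exists S1; split; auto. apply SubBU_Out; auto.
  - simpl in HV. apply SubBU_Br in HV. destruct HV as [->|[p' [Hin Ht]]].
    + left. exists (SBranch bs); split; [apply SubBU_Br; auto|reflexivity].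
    + apply in_map_iff in Hin. destruct Hin as [p [<- Hin]].
      destruct (H p Hin _ _ _ Ht) as [[S1 [H1 ->]]|HR]; auto.
      left. exists S1; split; auto. apply SubBU_Br; eauto.
  - simpl in HV. apply SubBU_Sel in HV. destruct HV as [->|[p' [Hin Ht]]].
    + left. exists (SSelect bs); split; [apply SubBU_Sel; auto|reflexivity].
    + apply in_map_iff in Hin. destruct Hin as [p [<- Hin]].
      destruct (H p Hin _ _ _ Ht) as [[S1 [H1 ->]]|HR]; auto.
      left. exists S1; split; auto. apply SubBU_Sel; eauto.
Qed.
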